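(* Let $n\ge1$. The map $X\mapsto\rho_{-,-}(X)$ is a bijection from the free abelian group $\mathbb{Z}[J(n)]$ onto the set of generalized rank invariants.
   Context: $J(n)=\{(\mathbf x,\mathbf y)\in\mathbb{Z}^n\times\mathbb{Z}^n:\mathbf x\le\mathbf y\}$ (componentwise order). $\mathbb{Z}[J(n)]$ (the group completion $K(Sp^\infty(J(n)))$ of the monoid of finite multisets of elements of $J(n)$) consists of finite formal sums $\sum_i c_i(\mathbf x_i,\mathbf y_i)$, $c_i\in\mathbb{Z}$. A generalized rank invariant is a function $\rho:\mathbb{Z}^n\times\mathbb{Z}^n\to\mathbb{Z}$ such that (1) $\rho_{\mathbf u,\mathbf v}=0$ unless $\mathbf u\le\mathbf v$, and (2) there exist $\mathbf u_0,\mathbf v_0\in\mathbb{Z}^n$ with $\rho_{\mathbf u,\mathbf v}=0$ unless $\mathbf u\ge\mathbf u_0$ and $\mathbf v\le\mathbf v_0$. For $(\mathbf x,\mathbf y)\in J(n)$, $\rho_{\mathbf u,\mathbf v}((\mathbf x,\mathbf y))=1$ if $\mathbf x\le\mathbf u\le\mathbf v\le\mathbf y$ and $0$ otherwise, extended $\mathbb{Z}$-linearly to $\mathbb{Z}[J(n)]$. *)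

(* Defs.v *)
From HB Require Import structures.
From mathcomp Require Import all_boot all_order all_algebra.
Set Implicit Arguments. Unset Strict Implicit. Unset Printing Implicit Defensive.
Import Order.TTheory GRing.Theory Num.Theory.
Local Open Scope ring_scope.

Definition vec (n : nat) := {ffun 'I_n -> int}.

Definition vle (n : nat) (x y : vec n) : bool := [forall i, x i <= y i].

Definition is_gen_rank_inv (n : nat) (rho : vec n -> vec n -> int) : Prop :=
  (forall u v : vec n, ~~ vle u v -> rho u v = 0) /\
  (exists u0 v0 : vec n, forall u v : vec n,
      ~~ (vle u0 u && vle v v0) -> rho u v = 0).

(* An element of the free abelian group Z[J(n)]: a finitely supported
   integer-valued coefficient function on J(n) (extended by 0 outside J(n)),
   together with a finite list containing its support. Two elements are the
   same iff their coefficient functions agree. *)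
Record ZJ (n : nat) := MkZJ {
  coef : vec n * vec n -> int;
  supp : seq (vec n * vec n);
  supp_cover : forall p, coef p != 0 -> p \in supp;
  coef_J : forall p, coef p != 0 -> vle p.1 p.2
}.

Definition rank_of (n : nat) (X : ZJ n) (u v : vec n) : int :=
  \sum_(p <- undup (supp X))
     (if [&& vle p.1 u, vle u v & vle v p.2] then coef X p else 0).

(* Main.v *)
Require Import Defs.
From HB Require Import structures.
From mathcomp Require Import all_boot all_order all_algebra.
From mathcomp Require Import lra zify.
Set Implicit Arguments. Unset Strict Implicit. Unset Printing Implicit Defensive.
Import Order.TTheory GRing.Theory Num.Theory.
Local Open Scope ring_scope.

Lemma vleP n (x y : vec n) : reflect (forall i, x i <= y i) (vle x y).
Proof. exact: forallP. Qed.

Lemma vle_trans n (x y z : vec n) : vle x y -> vle y z -> vle x z.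
Proof. move=> /vleP h1 /vleP h2; apply/vleP => i; exact: le_trans (h1 i) (h2 i). Qed.

Definition cnd n (q : vec n * vec n) (u v : vec n) := [&& vle q.1 u, vle u v & vle v q.2].

Definition msr n (p : vec n * vec n) : int := \sum_(i < n) (p.2 i - p.1 i).

Lemma msr_ge0 n (p : vec n * vec n) : vle p.1 p.2 -> 0 <= msr p.
Proof. move=> /vleP h; apply: sumr_ge0 => i _; rewrite subr_ge0; exact: h. Qed.

Lemma msr_le n (p q : vec n * vec n) : vle q.1 p.1 -> vle p.2 q.2 -> msr p <= msr q.
Proof.
move=> /vleP h1 /vleP h2; apply: ler_sum => i _.
have := h1 i; have := h2 i; lra.
Qed.

Lemma msr_lt n (p q : vec n * vec n) : p != q -> vle q.1 p.1 -> vle p.2 q.2 -> msr p < msr q.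
Proof.
move=> npq /vleP h1 /vleP h2.
have [i hi] : exists i, (p.1 i != q.1 i) || (p.2 i != q.2 i).
  apply/existsP; apply: contraNT npq; rewrite negb_exists => /forallP h.
  have e1 : p.1 = q.1 by apply/ffunP => i; move: (h i); rewrite negb_or !negbK => /andP[/eqP] .
  have e2 : p.2 = q.2 by apply/ffunP => i; move: (h i); rewrite negb_or !negbK => /andP[_ /eqP].
  by case: p q e1 e2 {h1 h2 h} => a b [c d] /= -> ->.
rewrite /msr (bigD1 i) //= [X in _ < X](bigD1 i) //=.
have le : \sum_(j < n | j != i) (p.2 j - p.1 j) <= \sum_(j < n | j != i) (q.2 j - q.1 j).
  apply: ler_sum => j _; have := h1 j; have := h2 j; lra.
have a1 := h1 i; have a2 := h2 i.
case/orP: hi => hi.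
- have : q.1 i < p.1 i by rewrite lt_neqAle eq_sym hi a1.
  lra.
- have : p.2 i < q.2 i by rewrite lt_neqAle hi a2.
  lra.
Qed.

Lemma count_lt (T : eqType) (P P' : pred T) (s : seq T) x :
  x \in s -> P x -> ~~ P' x -> (forall y, P' y -> P y) -> (count P' s < count P s)%N.
Proof.
elim: s => //= y s IH /predU1P [<-|xs] Px nP' sub.
- by rewrite Px (negbTE nP') add0n add1n ltnS; apply: sub_count.
- have := IH xs Px nP' sub => h.
  rewrite -addnS; apply: leq_add => //.
  by case: (P' y) (sub y) => // ->.
Qed.
Lemma sum_support (T : eqType) (f : T -> int) (s1 s2 : seq T) :
  uniq s1 -> uniq s2 -> (forall x, f x != 0 -> x \in s1) -> (forall x, f x != 0 -> x \in s2) ->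
  \sum_(x <- s1) f x = \sum_(x <- s2) f x.
Proof.
move=> u1 u2 c1 c2.
have E s : \sum_(x <- s) f x = \sum_(x <- [seq x <- s | f x != 0]) f x.
  by rewrite big_filter [RHS]big_mkcond; apply: eq_bigr => x _; case: eqP => // ->.
rewrite E [RHS]E; apply: perm_big; apply: uniq_perm; rewrite ?filter_uniq //.
move=> x; rewrite !mem_filter; case nz: (f x != 0) => //=; by rewrite (c1 _ nz) (c2 _ nz).
Qed.

Definition R n (L : seq (vec n * vec n)) (c : vec n * vec n -> int) u v :=
  \sum_(p <- undup L) (if cnd p u v then c p else 0).

Lemma R_add n L (c1 c2 : vec n * vec n -> int) u v :
  R L (fun p => c1 p + c2 p) u v = R L c1 u v + R L c2 u v.
Proof. by rewrite /R -big_split; apply: eq_bigr => p _; case: ifP; rewrite ?addr0. Qed.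

Lemma R_delta n L (p : vec n * vec n) a u v : p \in L ->
  R L (fun q => if q == p then a else 0) u v = if cnd p u v then a else 0.
Proof.
move=> pL; rewrite /R (bigD1_seq p) ?mem_undup ?undup_uniq //= eqxx big1 ?addr0 //.
by move=> q /negbTE ->; case: ifP.
Qed.

Lemma vle_refl n (x : vec n) : vle x x.
Proof. by apply/vleP. Qed.

Lemma R0 n L (u v : vec n) : R L (fun _ => 0) u v = 0.
Proof. by rewrite /R big1 // => p _; case: ifP. Qed.

Lemma step n (u0 v0 : vec n) (L : seq (vec n * vec n))
  (HL : forall q, (q \in L) = [&& vle u0 q.1, vle q.1 q.2 & vle q.2 v0])
  (d : int) (c0 : nat)
  (IHc : forall rho : vec n -> vec n -> int,
    (forall u v, rho u v != 0 -> (u, v) \in L) ->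
    (forall u v, rho u v != 0 -> msr (u, v) <= d) ->
    (count (fun p => (rho p.1 p.2 != 0) && (msr p == d)) L <= c0)%N ->
    exists c : vec n * vec n -> int,
      (forall p, c p != 0 -> p \in L) /\ forall u v, R L c u v = rho u v)
  (rho : vec n -> vec n -> int)
  (H1 : forall u v, rho u v != 0 -> (u, v) \in L)
  (H2 : forall u v, rho u v != 0 -> msr (u, v) <= d)
  (H3 : (count (fun p => (rho p.1 p.2 != 0) && (msr p == d)) L <= c0.+1)%N) :
  exists c : vec n * vec n -> int,
    (forall p, c p != 0 -> p \in L) /\ forall u v, R L c u v = rho u v.
Proof.
set P := (fun p => _) in H3.
have [le|gt] := leqP (count P L) c0; first exact: IHc.
have : has P L by rewrite has_count; apply: leq_ltn_trans gt.
case/hasP=> p pL /andP[rp /eqP mp].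
set a := rho p.1 p.2.
pose rho' u v := rho u v - (if cnd p u v then a else 0).
have pL' := pL; rewrite HL in pL'; case/and3P: pL' => hu0 hp hv0.
have H1' : forall u v, rho' u v != 0 -> (u, v) \in L.
  move=> u v; rewrite /rho'; case: ifP => [/and3P[h1 h2 h3] _| _]; last by rewrite subr0; apply: H1.
  by rewrite HL /= h2 (vle_trans hu0 h1) (vle_trans h3 hv0).
have H2' : forall u v, rho' u v != 0 -> msr (u, v) <= d.
  move=> u v; rewrite /rho'; case: ifP => [/and3P[h1 h2 h3] _| _]; last by rewrite subr0; apply: H2.
  by rewrite -mp; apply: msr_le.
have H3' : (count (fun p => (rho' p.1 p.2 != 0) && (msr p == d)) L <= c0)%N.
  rewrite -ltnS; apply: leq_trans H3; apply: (count_lt pL).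
  - by rewrite /P rp mp eqxx.
  - by rewrite /= /rho' /cnd !vle_refl hp /= subrr eqxx.
  - case=> u v /=; rewrite /P /rho' /=; case: ifP => [/and3P[h1 h2 h3]| _]; last by rewrite subr0.
    have [e|nq] := eqVneq (u, v) p; first by move: rp mp; rewrite -e /= => -> ->; rewrite eqxx.
    move=> /andP[_ /eqP mq]; have := msr_lt nq h1 h3; rewrite mq mp ltxx //.
have [c' [c'L c'R]] := IHc rho' H1' H2' H3'.
exists (fun q => c' q + (if q == p then a else 0)); split.
  move=> q; have [->|nq] := eqVneq q p => //; rewrite addr0; exact: c'L.
move=> u v; rewrite R_add R_delta // c'R /rho' subrK //.
Qed.

Lemma main n (u0 v0 : vec n) (L : seq (vec n * vec n))
  (HL : forall q, (q \in L) = [&& vle u0 q.1, vle q.1 q.2 & vle q.2 v0]) :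
  forall (d c0 : nat) (rho : vec n -> vec n -> int),
  (forall u v, rho u v != 0 -> (u, v) \in L) ->
  (forall u v, rho u v != 0 -> msr (u, v) <= d%:Z) ->
  (count (fun p => (rho p.1 p.2 != 0) && (msr p == d%:Z)) L <= c0)%N ->
  exists c : vec n * vec n -> int,
    (forall p, c p != 0 -> p \in L) /\ forall u v, R L c u v = rho u v.
Proof.
elim=> [|d IHd] c0; elim: c0 => [|c0 IHc] rho H1 H2 H3.
- exists (fun _ => 0); split=> // u v; rewrite R0.
  apply/esym/eqP; apply: contraT => nz.
  have := H2 _ _ nz; have := H1 _ _ nz; rewrite HL => /and3P[_ uv _].
  have := msr_ge0 uv => g l.
  have e : msr (u, v) = 0 by lra.
  have : has (fun p => (rho p.1 p.2 != 0) && (msr p == 0%:Z)) L.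
    by apply/hasP; exists (u, v); [apply: H1 | rewrite /= nz e eqxx].
  by rewrite has_count => hc; move: (leq_trans hc H3).
- exact: (step HL IHc H1 H2 H3).
- apply: (IHd _ rho H1 _ (leqnn _)) => u v nz.
  have := H2 _ _ nz; rewrite le_eqVlt => /orP[/eqP e|]; last by rewrite -addn1 PoszD ltzD1.
  have : has (fun p => (rho p.1 p.2 != 0) && (msr p == d.+1%:Z)) L.
    by apply/hasP; exists (u, v); [apply: H1 | rewrite /= nz e eqxx].
  by rewrite has_count => hc; move: (leq_trans hc H3).
- exact: (step HL IHc H1 H2 H3).
Qed.

Definition boxK n (a b : vec n) : nat := (\max_(i < n) `|b i - a i|%N)%N.

Definition boxl n (a b : vec n) : seq (vec n) :=
  [seq [ffun i => a i + (nat_of_ord (f i))%:Z] | f : {ffun 'I_n -> 'I_(boxK a b).+1} <- enum {ffun 'I_n -> 'I_(boxK a b).+1}].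

Lemma mem_boxl n (a b g : vec n) : vle a g -> vle g b -> g \in boxl a b.
Proof.
move=> /vleP ha /vleP hb; apply/mapP.
exists [ffun i => inord `|g i - a i|%N]; first by rewrite mem_enum.
apply/ffunP => i; rewrite !ffunE inordK.
  rewrite gez0_abs ?subr_ge0 //; lra.
rewrite ltnS /boxK; apply: leq_trans (leq_bigmax i).
rewrite -lez_nat !gez0_abs ?subr_ge0 ?(le_trans (ha i) (hb i)) //.
have := hb i; lra.
Qed.

Lemma elem_le (T : eqType) (F : T -> int) (s : seq T) x :
  (forall y, 0 <= F y) -> x \in s -> F x <= \sum_(y <- s) F y.
Proof.
move=> F0; elim: s => //= a s IH; rewrite in_cons big_cons => /predU1P [->|xs].
  have : 0 <= \sum_(y <- s) F y by apply: sumr_ge0.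
  lra.
have := IH xs; have := F0 a; lra.
Qed.

Lemma exists_max (T : eqType) (P : pred T) (F : T -> int) (s : seq T) :
  has P s -> exists x, [/\ x \in s, P x & forall y, y \in s -> P y -> F y <= F x].
Proof.
elim: s => //= a s IH.
case Pa: (P a) => /=; last first.
  move=> hs; have [x [xs Px mx]] := IH hs; exists x; split => //; first by rewrite in_cons xs orbT.
  by move=> y; rewrite in_cons => /predU1P [->|ys]; [rewrite Pa | apply: mx].
move=> _; case hs: (has P s).
  have [x [xs Px mx]] := IH hs.
  have [le|lt] := leP (F a) (F x).
    exists x; split => //; first by rewrite in_cons xs orbT.
    by move=> y; rewrite in_cons => /predU1P [->|ys] //; apply: mx.
  exists a; split => //; first by rewrite in_cons eqxx.
  move=> y; rewrite in_cons => /predU1P [->|ys] // Py.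
  have := mx y ys Py; lra.
exists a; split => //; first by rewrite in_cons eqxx.
move=> y; rewrite in_cons => /predU1P [->|ys] // Py.
by move/hasP: hs; case; exists y.
Qed.

Theorem theorem4p11 (n : nat) (hn : (1 <= n)%N) :
  (forall X : ZJ n, is_gen_rank_inv (rank_of X)) /\
  (forall X Y : ZJ n, (forall u v : vec n, rank_of X u v = rank_of Y u v) ->
      forall p, coef X p = coef Y p) /\
  (forall rho : vec n -> vec n -> int, is_gen_rank_inv rho ->
      exists X : ZJ n, forall u v : vec n, rank_of X u v = rho u v).
Proof.
split; [|split].
- move=> X; set s := supp X.
  pose u0 : vec n := [ffun i => - \sum_(q <- s) `|(q : vec n * vec n).1 i|].
  pose v0 : vec n := [ffun i => \sum_(q <- s) `|(q : vec n * vec n).2 i|].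
  split.
    move=> u v nuv; rewrite /rank_of big1 // => p _.
    by rewrite (negbTE nuv) /= andbF.
  exists u0, v0 => u v h; rewrite /rank_of big1_seq // => p /andP[_ ps].
  rewrite mem_undup in ps.
  case: ifP => // /and3P[h1 _ h3]; exfalso; move/negP: h; apply.
  rewrite (vle_trans _ h1) ?(vle_trans h3) //; apply/vleP => i; rewrite ffunE.
    have := @elem_le _ (fun q : vec n * vec n => `|q.2 i|) _ _ (fun y => normr_ge0 _) ps; have := ler_norm (p.2 i); lra.
  have := @elem_le _ (fun q : vec n * vec n => `|q.1 i|) _ _ (fun y => normr_ge0 _) ps; have := ler_norm (- p.1 i).
  rewrite normrN; lra.
- move=> X Y h p; apply/eqP; apply: contraT => ne.
  set s := undup (supp X ++ supp Y).
  pose d q := coef X q - coef Y q.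
  have cov : forall q, d q != 0 -> q \in s.
    move=> q; rewrite mem_undup mem_cat /d.
    case: (eqVneq (coef X q) 0) => [->|/supp_cover -> //].
    case: (eqVneq (coef Y q) 0) => [->|/supp_cover -> //]; last by rewrite orbT.
    by rewrite subrr eqxx.
  have dJ : forall q, d q != 0 -> vle q.1 q.2.
    move=> q; rewrite /d.
    case: (eqVneq (coef X q) 0) => [->|/coef_J //].
    case: (eqVneq (coef Y q) 0) => [->|/coef_J //].
    by rewrite subrr eqxx.
  have ER : forall (Z : ZJ n) u v, (forall q, coef Z q != 0 -> q \in s) ->
      rank_of Z u v = \sum_(q <- s) (if cnd q u v then coef Z q else 0).
    move=> Z u v cZ; rewrite /rank_of; apply: sum_support; rewrite ?undup_uniq //.
      by move=> q; case: ifP => // _ /supp_cover; rewrite mem_undup.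
    by move=> q; case: ifP => // _ /cZ.
  have cX : forall q, coef X q != 0 -> q \in s.
    by move=> q /supp_cover; rewrite mem_undup mem_cat => ->.
  have cY : forall q, coef Y q != 0 -> q \in s.
    by move=> q /supp_cover; rewrite mem_undup mem_cat => ->; rewrite orbT.
  have key : forall u v, \sum_(q <- s) (if cnd q u v then d q else 0) = 0.
    move=> u v; apply/eqP; rewrite -subr_eq0 subr0.
    have -> : \sum_(q <- s) (if cnd q u v then d q else 0) =
       \sum_(q <- s) (if cnd q u v then coef X q else 0) -
       \sum_(q <- s) (if cnd q u v then coef Y q else 0).
      by rewrite -sumrB; apply: eq_bigr => q _; case: ifP; rewrite ?subr0.
    by rewrite -ER // -ER // h subrr.
  have hs : has (fun q => d q != 0) s.
    have dp : d p != 0 by rewrite /d subr_eq0.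
    by apply/hasP; exists p => //; apply: cov.
  have [q [qs dq qmax]] := exists_max (@msr n) hs.
  have := key q.1 q.2.
  rewrite (bigD1_seq q) ?undup_uniq //= /cnd !vle_refl (dJ _ dq) /=.
  rewrite big1 ?addr0; first by move/eqP; rewrite (negbTE dq).
  move=> r rq; case: ifP => // /andP[h1 h3].
  case: (eqVneq (d r) 0) => // dr.
  have qr : q != r by rewrite eq_sym.
  have lt := msr_lt qr h1 h3.
  have := qmax r (cov _ dr) dr; by rewrite leNgt lt.
- move=> rho [H1 [u0 [v0 H2]]].
  pose B := boxl u0 v0.
  pose L := [seq q <- [seq (x, y) | x <- B, y <- B] | [&& vle u0 q.1, vle q.1 q.2 & vle q.2 v0]].
  have HL : forall q, (q \in L) = [&& vle u0 q.1, vle q.1 q.2 & vle q.2 v0].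
    move=> q; rewrite mem_filter; case h: [&& _, _ & _] => //=.
    case/and3P: h; case: q => x y /= a b c.
    apply: (allpairs_f pair); apply: mem_boxl => //.
      exact: vle_trans c.
    exact: vle_trans b.
  have H1' : forall u v, rho u v != 0 -> (u, v) \in L.
    move=> u v nz; rewrite HL /=.
    case uv: (vle u v); last by have := H1 u v; rewrite uv => /(_ isT) e; rewrite e eqxx in nz.
    case hb: (vle u0 u && vle v v0); last by have := H2 u v; rewrite hb => /(_ isT) e; rewrite e eqxx in nz.
    by [].
  have H2' : forall u v, rho u v != 0 -> msr (u, v) <= (`|msr (u0, v0)|%N)%:Z.
    move=> u v /H1'; rewrite HL /= => /and3P[a _ c].
    apply: le_trans (msr_le (p := (u, v)) (q := (u0, v0)) a c) _.
    rewrite abszE; exact: ler_norm.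
  have [c [cL cR]] := main HL H1' H2' (leqnn _).
  have cJ : forall p, c p != 0 -> vle p.1 p.2.
    by move=> p /cL; rewrite HL => /and3P[].
  by exists (@MkZJ n c L cL cJ) => u v; rewrite -cR.
Qed.
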